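(* Let $G=(V,E)$ be a simple graph with $|V|=n$, adjacency matrix $A$, and let $D$ be the diagonal matrix of vertex degrees of $G$. A vector $x\in\{0,1\}^n$ solves $\mathrm{LCP}(A+I,-\mathbf{e})$ if and only if $$0\leq (A+I)x-\mathbf{e}\leq (D-I)(\mathbf{e}-x),$$ where $I$ is the $n\times n$ identity and $\mathbf{e}$ the all-ones vector.
   Context: $x$ solves $\mathrm{LCP}(A+I,-\mathbf{e})$ iff $x\geq 0$, $(A+I)x\geq\mathbf{e}$ and $x^\top((A+I)x-\mathbf{e})=0$. Inequalities between vectors are componentwise. *)

(* Defs.v *)
From HB Require Import structures.
From mathcomp Require Import all_boot all_order all_algebra.
Set Implicit Arguments. Unset Strict Implicit. Unset Printing Implicit Defensive.
Import Order.TTheory GRing.Theory Num.Theory.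
Local Open Scope ring_scope.

Definition simple_graph (n : nat) (adj : rel 'I_n) : Prop :=
  symmetric adj /\ irreflexive adj.

Definition adjmx (R : numDomainType) (n : nat) (adj : rel 'I_n) : 'M[R]_n :=
  \matrix_(i, j) (adj i j)%:R.

Definition degmx (R : numDomainType) (n : nat) (adj : rel 'I_n) : 'M[R]_n :=
  diag_mx (\row_i (#|[pred j | adj i j]|)%:R).

Definition ones (R : numDomainType) (n : nat) : 'cV[R]_n := const_mx 1.

Definition vle (R : numDomainType) (n : nat) (u v : 'cV[R]_n) : Prop :=
  forall i, u i 0 <= v i 0.

Definition solves_LCP (R : numDomainType) (n : nat) (M : 'M[R]_n) (q x : 'cV[R]_n)
  : Prop :=
  vle 0 x /\ vle 0 (M *m x + q) /\ (x^T *m (M *m x + q)) = 0.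

(* Main.v *)
Require Import Defs.
From HB Require Import structures.
From mathcomp Require Import all_boot all_order all_algebra.
Import Order.TTheory GRing.Theory Num.Theory.
Local Open Scope ring_scope.

Section H.
Variables (R : realFieldType) (n : nat) (adj : rel 'I_n) (x : 'cV[R]_n).
Hypothesis hx : forall i, x i 0 = 0 \/ x i 0 = 1.

Definition S i := \sum_j (adj i j)%:R * x j 0 : R.

Lemma x_ge0 i : 0 <= x i 0.
Proof. by case: (hx i) => ->. Qed.

Lemma Ax_entry i : ((adjmx R adj + 1%:M) *m x) i 0 = S i + x i 0.
Proof.
rewrite mulmxDl mul1mx mxE; congr (_ + _).
rewrite /S mxE; apply: eq_bigr => j _; by rewrite mxE.
Qed.

Lemma S_ge0 i : 0 <= S i.
Proof. apply: sumr_ge0 => j _; apply: mulr_ge0 => //; exact: x_ge0. Qed.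

Lemma S_le i : S i <= (#|[pred j | adj i j]|)%:R.
Proof.
have -> : ((#|[pred j | adj i j]|)%:R : R) = \sum_j (adj i j)%:R.
  rewrite -sum1_card natr_sum big_mkcond /=.
  by apply: eq_bigr => j _; rewrite inE; case: (adj i j).
apply: ler_sum => j _.
case: (adj i j) => /=; last by rewrite mul0r.
by rewrite mul1r; case: (hx j) => ->.
Qed.

Lemma D_entry i : ((degmx R adj - 1%:M) *m (ones R n - x)) i 0
   = ((#|[pred j | adj i j]|)%:R - 1) * (1 - x i 0).
Proof.
rewrite mulmxBl mul1mx /degmx mul_diag_mx !mxE.
by rewrite mulrBl mul1r.
Qed.

Lemma xty : (x^T *m ((adjmx R adj + 1%:M) *m x + - ones R n)) 0 0
  = \sum_i x i 0 * (S i + x i 0 - 1).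
Proof.
rewrite mxE; apply: eq_bigr => i _.
by rewrite mxE [in X in _ * X]mxE Ax_entry !mxE.
Qed.

End H.
Arguments S {R n} adj x i.

Theorem lemma7 (R : realFieldType) (n : nat) (adj : rel 'I_n)
  (hG : simple_graph adj) (x : 'cV[R]_n)
  (hx : forall i, x i 0 = 0 \/ x i 0 = 1) :
  solves_LCP (adjmx R adj + 1%:M) (- ones R n) x <->
  (vle 0 ((adjmx R adj + 1%:M) *m x - ones R n) /\
   vle ((adjmx R adj + 1%:M) *m x - ones R n)
       ((degmx R adj - 1%:M) *m (ones R n - x))).
Proof.
have E i : ((adjmx R adj + 1%:M) *m x - ones R n) i 0 = S adj x i + x i 0 - 1.
  by rewrite mxE Ax_entry !mxE.
split.
- move=> [_ [hy hz]]; split => // i.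
  have hz' := congr1 (fun M : 'M[R]_1 => M 0 0) hz; rewrite /= (@xty _ _ adj x) mxE in hz'.
  have : x i 0 * (S adj x i + x i 0 - 1) = 0.
    move/eqP: hz'; rewrite psumr_eq0 => [/allP H|j _].
      by apply/eqP; apply: (implyP (H i (mem_index_enum _))).
    apply: mulr_ge0; first exact: (@x_ge0 _ _ x hx).
    by have := hy j; rewrite E mxE.
  rewrite E D_entry; case: (hx i) => -> /=.
    move=> _; rewrite subr0 mulr1 addr0 lerD2r; exact: (@S_le _ _ adj x hx).
  by rewrite mul1r addrK => ->; rewrite subrr mulr0.
- move=> [hy hle]; split; first by move=> i; rewrite mxE; exact: (@x_ge0 _ _ x hx).
  split => //.
  apply/matrixP => i j; rewrite !ord1 (@xty _ _ adj x) mxE.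
  apply: big1 => k _.
  have := hle k; rewrite E D_entry; case: (hx k) => -> ; first by rewrite mul0r.
  rewrite subrr mulr0 addrK mul1r => Hk.
  by apply/eqP; rewrite eq_le Hk (@S_ge0 _ _ adj x hx).
Qed.
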